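(* For any hypergraph $\mathcal{H}=(V,E)$ (with $V=\bigcup_{e\in E}e$): (1) $\kappa(\mathcal{H})\ge \tau^*(\mathsf{red}(\mathcal{H}))$; (2) $\kappa(\mathcal{H})\ge \rho^*(\mathsf{red}(\mathcal{H}))=\rho^*(\mathcal{H})$; (3) $\kappa(\mathcal{H})\le \psi^*(\mathcal{H})$.
   Context: For $S\subseteq V$, $\mathcal{H}[S]$ is the hypergraph with vertex set $S$ and edge set $\{S\cap e : e\in E,\ S\cap e\neq\emptyset\}$. The reduced hypergraph $\mathsf{red}(\mathcal{H})$ has the same vertex set and is obtained by removing every edge $e$ for which there is another edge $e'\neq e$ with $e\subseteq e'$. $\tau^*(\mathcal{H})$ is the value of a maximum fractional edge packing (nonnegative edge weights with $\sum_{e\ni v}u_e\le1$ for every vertex $v$), equivalently of a minimum fractional vertex cover. $\rho^*(\mathcal{H})$ is the value of a minimum fractional edge cover (nonnegative edge weights with $\sum_{e\ni v}u_e\ge1$ for every vertex $v$). The reduced quasi vertex-cover is $\kappa(\mathcal{H})=\max_{S\subseteq V}\tau^*(\mathsf{red}(\mathcal{H}[S]))$, and the edge quasi-packing is $\psi^*(\mathcal{H})=\max_{S\subseteq V}\tau^*(\mathcal{H}[S])$. *)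

(* Defs.v *)
From mathcomp Require Import all_boot all_order all_algebra.
From mathcomp Require Import boolp classical_sets reals.
Set Implicit Arguments. Unset Strict Implicit. Unset Printing Implicit Defensive.
Import Order.TTheory GRing.Theory Num.Theory.
Local Open Scope ring_scope.
Local Open Scope classical_set_scope.

Section Hyp.
Variables (R : realType) (V : finType).

Definition induced (S : {set V}) (E : {set {set V}}) : {set {set V}} :=
  [set S :&: e | e in E & S :&: e != finset.set0].

Definition red (E : {set {set V}}) : {set {set V}} :=
  [set e in E | ~~ [exists e' in E, (e' != e) && (e \subset e')]].

Definition frac_packing (W : {set V}) (F : {set {set V}}) (u : {set V} -> R) :=
  (forall e, e \in F -> 0 <= u e) /\
  (forall v, v \in W -> \sum_(e in F | v \in e) u e <= 1).

Definition frac_cover (W : {set V}) (F : {set {set V}}) (u : {set V} -> R) :=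
  (forall e, e \in F -> 0 <= u e) /\
  (forall v, v \in W -> 1 <= \sum_(e in F | v \in e) u e).

Definition tau_star (W : {set V}) (F : {set {set V}}) : R :=
  sup [set x | exists u, frac_packing W F u /\ x = \sum_(e in F) u e].

Definition rho_star (W : {set V}) (F : {set {set V}}) : R :=
  inf [set x | exists u, frac_cover W F u /\ x = \sum_(e in F) u e].

(* kappa(H) = max_{S ⊆ V} tau^*(red(H[S])) ; all values are >= 0 *)
Definition kappa (W : {set V}) (E : {set {set V}}) : R :=
  \big[Num.max/0]_(S : {set V} | S \subset W) tau_star S (red (induced S E)).

Definition psi_star (W : {set V}) (E : {set {set V}}) : R :=
  \big[Num.max/0]_(S : {set V} | S \subset W) tau_star S (induced S E).

End Hyp.

(* Main.v *)
Require Import Defs.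
From mathcomp Require Import all_boot all_order all_algebra.
From mathcomp Require Import ring lra.
Import Order.TTheory GRing.Theory Num.Theory.
Local Open Scope ring_scope.

Set Implicit Arguments. Unset Strict Implicit. Unset Printing Implicit Defensive.

Section Farkas.
Variables (R : realFieldType) (I : finType).
Definition C := ((I -> R) * R)%type.
Definition addc (c d : C) : C := ((fun i => c.1 i + d.1 i), c.2 + d.2).
Definition scalec (l : R) (c : C) : C := ((fun i => l * c.1 i), l * c.2).
Definition zc : C := ((fun _ => 0), 0).

Inductive der (K : finType) (con : K -> C) (D : {set I}) : C -> Prop :=
| derIn k : der con D (con k)
| derZ : der con D zc
| derAdd (c d : C) : der con D c -> der con D d -> der con D (addc c d)
| derScale l (c : C) : 0 <= l -> der con D c -> der con D (scalec l c)
| derConv (c d : C) : der con D c -> (forall i, i \in D -> d.1 i = c.1 i) ->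
    c.2 <= d.2 -> der con D d.

Lemma der_mult (K : finType) (con : K -> C) D c : der con D c ->
  exists lam : K -> R, (forall k, 0 <= lam k) /\
    (forall i, i \in D -> c.1 i = \sum_k lam k * (con k).1 i) /\
    \sum_k lam k * (con k).2 <= c.2.
Proof.
elim.
- move=> k; exists (fun k' => if k' == k then 1 else 0); split.
    by move=> k'; case: eqP.
  split.
    move=> i _; rewrite (bigD1 k) //= eqxx mul1r big1 ?addr0 // => k' /negbTE ->.
    by rewrite mul0r.
  rewrite (bigD1 k) //= eqxx mul1r big1 ?addr0 // => k' /negbTE ->.
  by rewrite mul0r.
- exists (fun _ => 0); split => //; split.
    by move=> i _; rewrite big1 // => k _; rewrite mul0r.
  by rewrite big1 // => k _; rewrite mul0r.
- move=> c1 d1 _ [l1 [h1 [h2 h3]]] _ [l2 [g1 [g2 g3]]].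
  exists (fun k => l1 k + l2 k); split; first by move=> k; rewrite addr_ge0.
  split.
    move=> i iD; rewrite /= h2 // g2 // -big_split /=.
    by apply: eq_bigr => k _; rewrite mulrDl.
  rewrite /=; apply: le_trans (lerD h3 g3); rewrite -big_split /=.
  by rewrite le_eqVlt; apply/orP; left; apply/eqP; apply: eq_bigr => k _; rewrite mulrDl.
- move=> l c1 l0 _ [l1 [h1 [h2 h3]]].
  exists (fun k => l * l1 k); split; first by move=> k; rewrite mulr_ge0.
  split.
    move=> i iD; rewrite /= h2 // mulr_sumr.
    by apply: eq_bigr => k _; rewrite mulrA.
  rewrite /= (@le_trans _ _ (l * \sum_k l1 k * (con k).2)) //.
    by rewrite mulr_sumr le_eqVlt; apply/orP; left; apply/eqP; apply: eq_bigr => k _; rewrite mulrA.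
  by rewrite ler_wpM2l.
- move=> c1 d1 _ [l1 [h1 [h2 h3]]] hc hle.
  exists l1; split => //; split; first by move=> i iD; rewrite hc // h2.
  exact: le_trans hle.
Qed.

Lemma seqmax (s : seq R) x : exists2 m, m \in x :: s & forall b, b \in x :: s -> b <= m.
Proof.
elim: s x => [|y s IH] x.
  by exists x; rewrite ?inE // => b; rewrite inE => /eqP ->.
have [m' hm' hb] := IH y.
case: (leP x m') => hx.
  exists m'; first by rewrite inE hm' orbT.
  by move=> b; rewrite inE => /orP [/eqP ->|]; [|apply: hb].
exists x; first by rewrite inE eqxx.
move=> b; rewrite inE => /orP [/eqP -> //|/hb hbm]; exact/ltW/(le_lt_trans hbm).
Qed.

Lemma exists_between (K : finType) (P Q : pred K) (L U : K -> R) :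
  (forall q p, P q -> Q p -> L q <= U p) ->
  exists t, (forall q, P q -> L q <= t) /\ (forall p, Q p -> t <= U p).
Proof.
move=> hLU.
case eL: [seq L q | q <- enum K & P q] => [|x s].
  case eU: [seq - U p | p <- enum K & Q p] => [|y s'].
    exists 0; split.
      move=> q Pq; have : L q \in [seq L q | q <- enum K & P q].
        by apply: map_f; rewrite mem_filter Pq mem_enum.
      by rewrite eL.
    move=> p Qp; have : - U p \in [seq - U p | p <- enum K & Q p].
      by apply: map_f; rewrite mem_filter Qp mem_enum.
    by rewrite eU.
  have [m hm hb] := seqmax s' y.
  exists (- m); split.
    move=> q Pq; have : L q \in [seq L q | q <- enum K & P q].
      by apply: map_f; rewrite mem_filter Pq mem_enum.
    by rewrite eL.
  move=> p Qp; have : - U p \in [seq - U p | p <- enum K & Q p].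
    by apply: map_f; rewrite mem_filter Qp mem_enum.
  by rewrite eU => /hb; rewrite lerNl.
have [m hm hb] := seqmax s x.
exists m; split.
  move=> q Pq; apply: hb; rewrite -eL.
  by apply: map_f; rewrite mem_filter Pq mem_enum.
move=> p Qp; move: hm; rewrite -eL => /mapP [q]; rewrite mem_filter => /andP [Pq _] ->.
exact: hLU.
Qed.

Lemma farkas n : forall (D : {set I}) (K : finType) (con : K -> C), #|D| = n ->
  ~ (exists x : I -> R, forall k, \sum_(i in D) (con k).1 i * x i <= (con k).2) ->
  exists c, der con D c /\ (forall i, i \in D -> c.1 i = 0) /\ c.2 < 0.
Proof.
elim: n => [|n IH] D K con hD hinf.
  have D0 : D = set0 by apply/eqP; rewrite -cards_eq0 hD.
  case: (boolP [forall k, 0 <= (con k).2]) => h.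
    exfalso; apply: hinf; exists (fun _ => 0) => k; rewrite D0 big_set0.
    by move/forallP: h.
  move/forallPn: h => [k hk]; exists (con k); split; first exact: derIn.
  split; first by move=> i; rewrite D0 inE.
  by rewrite ltNge.
have [j jD] : exists j, j \in D by apply/set0Pn; rewrite -cards_eq0 hD.
set D' := D :\ j.
have hD' : #|D'| = n.
  by move: hD; rewrite (cardsD1 j D) jD add1n => -[].
pose pos k := 0 < (con k).1 j.
pose neg k := (con k).1 j < 0.
pose comb p q := addc (scalec (- (con q).1 j) (con p)) (scalec ((con p).1 j) (con q)).
pose con' (pq : K * K) := if pos pq.1 && neg pq.2 then comb pq.1 pq.2
  else if (pq.1 == pq.2) && ((con pq.1).1 j == 0) then con pq.1 else zc.
have hA : forall pq, der con D (con' pq) /\ (con' pq).1 j = 0.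
  case=> p q; rewrite /con' /=; case: ifP => [/andP [hp hq]|_].
    split.
      apply: derAdd; apply: derScale; try exact: derIn.
        by rewrite oppr_ge0 ltW.
      exact: ltW.
    rewrite /comb /addc /scalec /=; ring.
  case: ifP => [/andP [_ /eqP h0]|_]; first by split; [exact: derIn|].
  by split; [exact: derZ|rewrite /zc].
have hB : ~ exists x, forall pq, \sum_(i in D') (con' pq).1 i * x i <= (con' pq).2.
  move=> [x hx]; apply: hinf.
  pose r k := \sum_(i in D') (con k).1 i * x i.
  pose L k := ((con k).2 - r k) / (con k).1 j.
  have [t [ht1 ht2]] : exists t, (forall q, neg q -> L q <= t) /\ (forall p, pos p -> t <= L p).
    apply: exists_between => q p hq hp.
    have := hx (p, q); rewrite /con' /= hp hq /= /comb /addc /scalec /=.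
    have -> : \sum_(i in D') (- (con q).1 j * (con p).1 i + (con p).1 j * (con q).1 i) * x i =

        - (con q).1 j * r p + (con p).1 j * r q.
      rewrite /r !mulr_sumr -big_split /=; apply: eq_bigr => i _; ring.
    move=> h.
    rewrite /L -subr_ge0.
    have e : ((con p).2 - r p) / (con p).1 j - ((con q).2 - r q) / (con q).1 j =
      (- (con q).1 j * ((con p).2 - r p) + (con p).1 j * ((con q).2 - r q)) /
      ((con p).1 j * - (con q).1 j).
      by field; rewrite (lt0r_neq0 hp) (ltr0_neq0 hq).
    rewrite e; apply: divr_ge0.
      by rewrite -subr_ge0 in h; move: h; congr (0 <= _); ring.
    by rewrite mulr_ge0 // ?oppr_ge0 ltW.
  exists (fun i => if i == j then t else x i) => k.
  rewrite (bigD1 j) //= eqxx.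
  have -> : \sum_(i in D | i != j) (con k).1 i * (if i == j then t else x i) = r k.
    rewrite /r /D'; apply: eq_big => [i|i /andP [_ /negbTE ->]] //.
    by rewrite in_setD1 andbC.
  case: (ltgtP ((con k).1 j) 0) => hk.
  - have := ht1 k hk; rewrite /L ler_ndivrMr // => h.
    rewrite mulrC; lra.
  - have := ht2 k hk; rewrite /L ler_pdivlMr // => h.
    rewrite mulrC; lra.
  - have := hx (k, k); rewrite /con' /= /pos /neg hk ltxx /= eqxx /= => h.
    rewrite mul0r add0r; move: h; rewrite eqxx; exact.
have [c [hc1 [hc2 hc3]]] := IH D' _ con' hD' hB.
have hC : forall c, der con' D' c -> exists c2, der con D c2 /\
    (forall i, i \in D' -> c2.1 i = c.1 i) /\ c2.1 j = 0 /\ c2.2 = c.2.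
  move=> c0; elim.
  - by move=> pq; exists (con' pq); have [h1 h2] := hA pq.
  - by exists zc; split; [exact: derZ| rewrite /zc].
  - move=> c1 d1 _ [c2 [h1 [h2 [h3 h4]]]] _ [d2 [g1 [g2 [g3 g4]]]].
    exists (addc c2 d2); split; first exact: derAdd.
    split; first by move=> i iD; rewrite /= h2 ?g2.
    by rewrite /= h3 g3 addr0 h4 g4.
  - move=> l c1 hl _ [c2 [h1 [h2 [h3 h4]]]].
    exists (scalec l c2); split; first exact: derScale.
    split; first by move=> i iD; rewrite /= h2.
    by rewrite /= h3 mulr0 h4.
  - move=> c1 d1 _ [c2 [h1 [h2 [h3 h4]]]] hcv hle.
    exists ((fun i => if i == j then 0 else d1.1 i), d1.2); split.
      apply: (derConv h1) => /= [i iD|]; last by rewrite h4.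
      case: eqP => [->|/eqP ij]; first by rewrite h3.
      by rewrite hcv ?h2 // in_setD1 ij iD.
    split; first by move=> i; rewrite in_setD1 => /andP [/negbTE ij _]; rewrite /= ij.
    by rewrite /= eqxx.
have [c2 [h1 [h2 [h3 h4]]]] := hC c hc1.
exists c2; split => //; split; last by rewrite h4.
move=> i iD; case: (eqVneq i j) => [->//|ij]; rewrite h2 ?hc2 // in_setD1 ij iD //=.
Qed.

Lemma farkas_mult (D : {set I}) (K : finType) (con : K -> C) :
  ~ (exists x : I -> R, forall k, \sum_(i in D) (con k).1 i * x i <= (con k).2) ->
  exists lam : K -> R, (forall k, 0 <= lam k) /\
    (forall i, i \in D -> \sum_k lam k * (con k).1 i = 0) /\
    \sum_k lam k * (con k).2 < 0.
Proof.
move=> h; have [c [h1 [h2 h3]]] := farkas (erefl #|D|) h.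
have [lam [g1 [g2 g3]]] := der_mult h1.
exists lam; split => //; split; first by move=> i iD; rewrite -g2 // h2.
exact: le_lt_trans h3.
Qed.
End Farkas.

From mathcomp Require Import boolp classical_sets reals.
Import Order.TTheory GRing.Theory Num.Theory.
Local Open Scope ring_scope.


Section Hyp2.
Variables (R : realType) (V : finType).
Implicit Types (W S : {set V}) (F E : {set {set V}}).

Definition packset W F := [set x : R | exists u, frac_packing W F u /\ x = \sum_(e in F) u e]%classic.
Definition coverset W F := [set x : R | exists u, frac_cover W F u /\ x = \sum_(e in F) u e]%classic.

Lemma pack_le1 W F (u : {set V} -> R) e v : frac_packing W F u -> e \in F -> v \in W ->
  v \in e -> u e <= 1.
Proof.
move=> [h1 h2] eF vW ve; apply: le_trans (h2 v vW).
rewrite (bigD1 e) /=; last by rewrite eF ve.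
by rewrite lerDl sumr_ge0 // => f /andP [/andP [fF _] _]; apply: h1.
Qed.

Lemma packset_ub W F : (forall e, e \in F -> exists2 v, v \in W & v \in e) ->
  has_sup (packset W F).
Proof.
move=> hF; split.
  exists 0, (fun _ => 0); split; last by rewrite big1.
  by split => // v _; rewrite big1.
exists (#|F|%:R) => x [u [hu ->]].
rewrite -sum1_card natr_sum; apply: ler_sum => e eF.
by have [v vW ve] := hF e eF; apply: pack_le1 hu eF vW ve.
Qed.

Lemma tau_ge W F (u : {set V} -> R) : (forall e, e \in F -> exists2 v, v \in W & v \in e) ->
  frac_packing W F u -> \sum_(e in F) u e <= tau_star R W F.
Proof.
move=> hF hu; have [_ hub] := packset_ub hF.
by apply: (ub_le_sup hub); exists u.
Qed.

Lemma tau_le W F (x : R) : (forall u : {set V} -> R, frac_packing W F u -> \sum_(e in F) u e <= x) ->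
  tau_star R W F <= x.
Proof.
move=> h; apply: ge_sup.
  exists 0, (fun _ => 0); split; last by rewrite big1.
  by split => // v _; rewrite big1.
by move=> y [u [hu ->]]; apply: h.
Qed.

Lemma rho_le W F (u : {set V} -> R) : frac_cover W F u -> rho_star R W F <= \sum_(e in F) u e.
Proof.
move=> hu; apply: ge_inf; last by exists u.
exists 0 => y [u' [[h1 _] ->]]; exact: sumr_ge0.
Qed.

Lemma rho_ge W F (x : R) : (exists u : {set V} -> R, frac_cover W F u) ->
  (forall u : {set V} -> R, frac_cover W F u -> x <= \sum_(e in F) u e) -> x <= rho_star R W F.
Proof.
move=> [u hu] h; apply: lb_le_inf; first by exists (\sum_(e in F) u e), u.
by move=> y [u' [hu' ->]]; apply: h.
Qed.


Lemma sum_unit (F : unit -> R) : \sum_(k : unit) F k = F tt.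
Proof. by rewrite (bigD1 tt) //= big_pred0 ?addr0 // => -[]; rewrite eqxx. Qed.

Lemma sum_if (T : finType) (P : pred T) (c : R) (f : T -> R) :
  \sum_i (if P i then c else 0) * f i = c * \sum_(i | P i) f i.
Proof.
rewrite mulr_sumr [RHS]big_mkcond; apply: eq_bigr => i _.
by case: (P i); rewrite ?mul0r ?mulr0.
Qed.

Lemma sum_if' (T : finType) (P : pred T) (c : R) (f : T -> R) :
  \sum_i f i * (if P i then c else 0) = c * \sum_(i | P i) f i.
Proof.
by rewrite -sum_if; apply: eq_bigr => i _; rewrite mulrC.
Qed.

Lemma sum_0 (T : finType) (f : T -> R) : \sum_i f i * 0 = 0.
Proof. by rewrite big1 // => i _; rewrite mulr0. Qed.

Lemma sum_0' (T : finType) (f : T -> R) : \sum_i 0 * f i = 0.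
Proof. by rewrite big1 // => i _; rewrite mul0r. Qed.

Lemma sum_single (T : finType) (a : T) (c : R) (f : T -> R) :
  \sum_i f i * (if a == i then c else 0) = c * f a.
Proof.
rewrite (bigD1 a) //= eqxx big1; first by rewrite addr0 mulrC.
move=> i /negbTE.
by rewrite eq_sym => ->; rewrite mulr0.
Qed.

Lemma sum_single' (T : finType) (a : T) (c : R) (f : T -> R) :
  \sum_i (if i == a then c else 0) * f i = c * f a.
Proof.
rewrite -(sum_single a); apply: eq_bigr => i _; rewrite mulrC eq_sym //.
Qed.

Lemma sum_exch E (g : V -> R) (d : {set V} -> R) :
  \sum_v g v * \sum_(e in E | v \in e) d e = \sum_(e in E) d e * \sum_(v | v \in e) g v.
Proof.
under eq_bigr do rewrite mulr_sumr.
under [RHS]eq_bigr do rewrite mulr_sumr.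
rewrite [LHS](eq_bigr (fun v => \sum_e (if (e \in E) && (v \in e) then g v * d e else 0)));
  last by move=> v _; rewrite big_mkcond.
rewrite exchange_big /= [RHS]big_mkcond; apply: eq_bigr => e _.
rewrite [RHS](fun_if (fun X => X)) /=.
case: (e \in E) => /=; last by rewrite big1.
by rewrite [RHS]big_mkcond; apply: eq_bigr => v _; case: (v \in e) => //; rewrite mulrC.
Qed.


Lemma sum_m1 (T : finType) (f : T -> R) : \sum_i f i * -1 = - \sum_i f i.
Proof. by rewrite -sumrN; apply: eq_bigr => i _; rewrite mulrN1. Qed.

Lemma sum_1 (T : finType) (f : T -> R) : \sum_i f i * 1 = \sum_i f i.
Proof. by apply: eq_bigr => i _; rewrite mulr1. Qed.

Local Notation Ity := ({set V} + V)%type.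
Local Notation Lab := ((({set V} + V) + (V + {set V})) + unit)%type.

Definition lpcon E (k : Lab) : C R Ity :=
 match k with
 | inl (inl (inl e)) => (fun i => match i with inl e' => if e' == e then -1 else 0 | inr _ => 0 end, 0)
 | inl (inl (inr v)) => (fun i => match i with inl _ => 0 | inr v' => if v' == v then -1 else 0 end, 0)
 | inl (inr (inl v)) => (fun i => match i with inl e => if (e \in E) && (v \in e) then -1 else 0 | inr _ => 0 end, -1)
 | inl (inr (inr e)) => (fun i => match i with inl _ => 0 | inr v => if (e \in E) && (v \in e) then 1 else 0 end, 1)
 | inr _ => (fun i => match i with inl e => if e \in E then 1 else 0 | inr _ => -1 end, 0)
 end.

Lemma duality E : (forall v, exists2 e, e \in E & v \in e) ->
  exists (u : {set V} -> R) (y : V -> R), [/\ (forall e, 0 <= u e), (forall v, 0 <= y v),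
    (forall v, 1 <= \sum_(e in E | v \in e) u e),
    (forall e, e \in E -> \sum_(v | v \in e) y v <= 1)
    & \sum_(e in E) u e <= \sum_v y v].
Proof.
move=> hcov.
have sT : forall f : Ity -> R, \sum_(i in [set: Ity]) f i = \sum_i f i.
  by move=> f; apply: eq_bigl => i; rewrite inE.
case: (pselect (exists x : Ity -> R, forall k,
   \sum_(i in [set: Ity]) (lpcon E k).1 i * x i <= (lpcon E k).2)) => [[x hx]|hinf].
  pose u e := x (inl e); pose y v := x (inr v).
  have ev : forall k, \sum_e (lpcon E k).1 (inl e) * u e +
      \sum_v (lpcon E k).1 (inr v) * y v <= (lpcon E k).2.
    by move=> k; have := hx k; rewrite sT big_sumType.
  exists u, y; split.
  - move=> e; have := ev (inl (inl (inl e))); rewrite /= sum_single' sum_0'; lra.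
  - move=> v; have := ev (inl (inl (inr v))); rewrite /= sum_single' sum_0'; lra.
  - move=> v; have := ev (inl (inr (inl v))); rewrite /= sum_if sum_0'; lra.
  - move=> e eE; have := ev (inl (inr (inr e))); rewrite /= sum_if sum_0' eE /=; lra.
  - have := ev (inr tt); rewrite /= sum_if.
    have -> : \sum_v -1 * y v = - \sum_v y v.
      by rewrite -sumrN; apply: eq_bigr => v _; rewrite mulN1r.
    lra.
exfalso.
have [lam [hl0 [hl1 hl2]]] := farkas_mult hinf.
have ex : forall f : Lab -> R, \sum_k f k =
   \sum_e f (inl (inl (inl e))) + \sum_v f (inl (inl (inr v))) +
   (\sum_v f (inl (inr (inl v))) + \sum_e f (inl (inr (inr e)))) + f (inr tt).
  by move=> f; rewrite !big_sumType sum_unit.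
pose al e := lam (inl (inl (inl e))).
pose be v := lam (inl (inl (inr v))).
pose ga v := lam (inl (inr (inl v))).
pose de e := lam (inl (inr (inr e))).
pose t := lam (inr tt).
have h1 : forall e, e \in E -> \sum_(v | v \in e) ga v <= t.
  move=> e eE; have := hl1 (inl e) (finset.in_setT _); rewrite ex /=.
  rewrite sum_single sum_0 sum_if' sum_0 eE /=.
  have := hl0 (inl (inl (inl e))); rewrite /ga /t; lra.
have h2 : forall v, t <= \sum_(e | (e \in E) && (v \in e)) de e.
  move=> v; have := hl1 (inr v) (finset.in_setT _); rewrite ex /=.
  rewrite sum_0 sum_single sum_0 sum_if'.
  have := hl0 (inl (inl (inr v))); rewrite /de /t; lra.
have h3 : \sum_e de e < \sum_v ga v.
  move: hl2; rewrite ex /= sum_0 sum_0 sum_m1 sum_1 /ga /de; lra.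
have h4 : \sum_(e in E) de e <= \sum_e de e.
  rewrite [leRHS](bigID (fun e => e \in E)) /= lerDl sumr_ge0 // => e _.
  exact: hl0.
have h5 : t * \sum_v ga v <= t * \sum_(e in E) de e.
  apply: (@le_trans _ _ (\sum_v ga v * \sum_(e in E | v \in e) de e)).
    rewrite mulr_sumr; apply: ler_sum => v _; rewrite mulrC ler_wpM2l //.
    exact: hl0.
  rewrite sum_exch mulr_sumr; apply: ler_sum => e eE.
  by rewrite mulrC ler_wpM2r //; [exact: hl0|exact: h1].
have ht : t <= 0.
  rewrite -(pmulr_lle0 _ (_ : 0 < \sum_v ga v - \sum_(e in E) de e)).
    by rewrite mulrBr subr_le0.
  by rewrite subr_gt0; exact: le_lt_trans h3.
have hg : \sum_v ga v <= 0.
  rewrite -oppr_ge0 -sumrN sumr_ge0 // => v _; rewrite oppr_ge0.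
  have [e eE ve] := hcov v.
  apply: le_trans (le_trans (h1 e eE) ht).
  rewrite (bigD1 v) //= lerDl sumr_ge0 // => v' _; exact: hl0.
have hd : 0 <= \sum_e de e by rewrite sumr_ge0 // => e _; exact: hl0.
lra.
Qed.


Lemma sub_sum (T : finType) (P Q : pred T) (f : T -> R) :
  (forall e, P e -> Q e) -> (forall e, Q e -> 0 <= f e) ->
  \sum_(e | P e) f e <= \sum_(e | Q e) f e.
Proof.
move=> hPQ hf; rewrite [leLHS]big_mkcond [leRHS]big_mkcond; apply: ler_sum => e _.
case Pe: (P e); first by rewrite (hPQ _ Pe).
by case Qe: (Q e) => //; apply: hf.
Qed.

Lemma red_sub F : red F \subset F.
Proof. by apply/fintype.subsetP => e; rewrite /red inE => /andP []. Qed.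

Lemma red_max F e : e \in F -> exists2 e', e' \in red F & e \subset e'.
Proof.
move=> eF.
have P0 : (fun f => (f \in F) && (e \subset f)) e by rewrite /= eF subxx.
case: (@arg_maxnP _ e (fun f : {set V} => (f \in F) && (e \subset f)) (fun f : {set V} => #|f|) P0) => e' /andP [e'F ee'] hmax.
exists e' => //; rewrite /red inE e'F /=; apply/negP => /existsP [e''].
case/andP => e''F /andP [ne see].
have := hmax e''; rewrite e''F (fintype.subset_trans ee' see) => /(_ isT) hc.
have hc2 : (#|e''| <= #|e'|)%N := hc.
by move: ne; rewrite eq_sym eqEcard see hc2.
Qed.

Lemma sum_ext F (P : pred {set V}) (u : {set V} -> R) :
  \sum_(e in F | P e) (if e \in red F then u e else 0) = \sum_(e in red F | P e) u e.
Proof.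
rewrite -big_mkcondr; apply: eq_bigl => e.
have := (fintype.subsetP (red_sub F)) e.
by case: (e \in red F); case: (e \in F); case: (P e) => //= /(_ isT).
Qed.

Lemma sum_ext0 F (u : {set V} -> R) :
  \sum_(e in F) (if e \in red F then u e else 0) = \sum_(e in red F) u e.
Proof.
rewrite -big_mkcondr; apply: eq_bigl => e.
have := (fintype.subsetP (red_sub F)) e.
by case: (e \in red F); case: (e \in F) => //= /(_ isT).
Qed.

Lemma ind_edge S E f : f \in induced S E -> exists2 v, v \in S & v \in f.
Proof.
rewrite /induced => /imsetP [e]; rewrite inE => /andP [_ ne] ->.
by case/set0Pn: ne => v; rewrite inE => /andP [vS ve]; exists v; rewrite // inE vS.
Qed.

Lemma tau_red_le S E : tau_star R S (red (induced S E)) <= tau_star R S (induced S E).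
Proof.
apply: tau_le => u [h1 h2].
pose u' e := if e \in red (induced S E) then u e else 0.
have -> : \sum_(e in red (induced S E)) u e = \sum_(e in induced S E) u' e.
  by rewrite -sum_ext0.
apply: tau_ge; first exact: ind_edge.
rewrite /frac_packing; split; first by move=> e _; rewrite /u'; case: ifP => // eR; apply: h1.
by move=> v vS; rewrite /u' sum_ext; apply: h2.
Qed.


Lemma cover_one W F : (forall v, v \in W -> exists2 e, e \in F & v \in e) ->
  frac_cover W F (fun _ => 1 : R).
Proof.
move=> h; split => // v vW; have [e eF ve] := h v vW.
by rewrite (bigD1 e) /= ?eF ?ve // lerDl sumr_ge0.
Qed.

Lemma rho_red E : (forall v, exists2 e, e \in E & v \in e) ->
  rho_star R [set: V] (red E) = rho_star R [set: V] E.
Proof.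
move=> hcov.
have hcovr : forall v, v \in [set: V] -> exists2 e, e \in red E & v \in e.
  move=> v _; have [e eE ve] := hcov v; have [e' e'r ee'] := red_max eE.
  by exists e' => //; apply: (fintype.subsetP ee').
have hcov' : forall v, v \in [set: V] -> exists2 e, e \in E & v \in e.
  by move=> v _; apply: hcov.
apply/eqP; rewrite eq_le; apply/andP; split.
  apply: rho_ge; first by exists (fun _ => 1); apply: cover_one.
  move=> u [hu1 hu2].
  pose f (e : {set V}) := if [pick e' in red E | e \subset e'] is Some e' then e' else e.
  have hf : forall e, e \in E -> f e \in red E /\ e \subset f e.
    move=> e eE; rewrite /f; case: pickP => [e' /andP [h1 h2] //|hn].
    have [e' e'r ee'] := red_max eE; have := hn e'; by rewrite e'r ee'.
  pose u' e' := \sum_(e | (e \in E) && (f e == e')) u e.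
  have -> : \sum_(e in E) u e = \sum_(e' in red E) u' e'.
    by apply: partition_big => e eE; case: (hf e eE).
  apply: rho_le; split.
    by move=> e' _; rewrite sumr_ge0 // => e /andP [eE _]; apply: hu1.
  move=> v _.
  have -> : \sum_(e' in red E | v \in e') u' e' = \sum_(e | (e \in E) && (v \in f e)) u e.
    symmetry; rewrite (partition_big f (fun e' => (e' \in red E) && (v \in e'))) /=; last first.
      by move=> e /andP [eE ve]; rewrite ve andbT; case: (hf e eE).
    apply: eq_bigr => e' /andP [_ ve']; apply: eq_bigl => e.
    by case: eqP => [->|]; rewrite ?ve' ?andbT ?andbF.
  apply: le_trans (hu2 v (finset.in_setT _)) _.
  apply: sub_sum => [e /andP [eE ve]|e /andP [eE _]]; last exact: hu1.
  by rewrite eE /=; case: (hf e eE) => _ /fintype.subsetP; apply.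
apply: rho_ge; first by exists (fun _ => 1); apply: cover_one.
move=> u [hu1 hu2].
pose u'' e := if e \in red E then u e else 0.
have -> : \sum_(e in red E) u e = \sum_(e in E) u'' e by rewrite -sum_ext0.
apply: rho_le; split.
  by move=> e _; rewrite /u''; case: ifP => // eR; apply: hu1.
by move=> v vW; rewrite /u'' sum_ext; apply: hu2.
Qed.

Lemma kappa_rho E : (forall v, exists2 e, e \in E & v \in e) ->
  exists S, rho_star R [set: V] E <= tau_star R S (red (induced S E)).
Proof.
move=> hcov; have [u [y [hu hy hcu hpy huy]]] := duality hcov.
set U := \sum_(e in E) u e.
have hA : \sum_(e in E) u e * (1 - \sum_(v | v \in e) y v) =
    U - \sum_v y v * \sum_(e in E | v \in e) u e.
  by rewrite sum_exch /U -sumrB; apply: eq_bigr => e _; rewrite mulrBr mulr1.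
have hB : \sum_v y v * (\sum_(e in E | v \in e) u e - 1) =
    \sum_v y v * \sum_(e in E | v \in e) u e - \sum_v y v.
  by rewrite -sumrB; apply: eq_bigr => v _; rewrite mulrBr mulr1.
have hM : \sum_v y v <= \sum_v y v * \sum_(e in E | v \in e) u e.
  by apply: ler_sum => v _; apply: ler_peMr.
have hA0 : 0 <= \sum_(e in E) u e * (1 - \sum_(v | v \in e) y v).
  by apply: sumr_ge0 => e eE; rewrite mulr_ge0 // subr_ge0; apply: hpy.
have hB0 : 0 <= \sum_v y v * (\sum_(e in E | v \in e) u e - 1).
  by apply: sumr_ge0 => v _; rewrite mulr_ge0 // subr_ge0.
have hcsA : forall e, e \in E -> u e * (1 - \sum_(v | v \in e) y v) = 0.
  move=> e0 e0E.
  apply: (@psumr_eq0P _ _ (fun e => e \in E) (fun e => u e * (1 - \sum_(v | v \in e) y v))) => //.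
    by move=> e eE; rewrite mulr_ge0 // subr_ge0; apply: hpy.
  apply/eqP; rewrite eq_le hA0 andbT hA; rewrite /U in huy *; lra.
have hcsB : forall v, y v * (\sum_(e in E | v \in e) u e - 1) = 0.
  move=> v0.
  apply: (@psumr_eq0P _ _ xpredT (fun v => y v * (\sum_(e in E | v \in e) u e - 1))) => //.
    by move=> w _; rewrite mulr_ge0 // subr_ge0.
  apply/eqP; rewrite eq_le hB0 andbT hB; move: hA0; rewrite hA; rewrite /U in huy *; lra.
pose S := [set v | 0 < y v].
have y0 : forall v, v \notin S -> y v = 0.
  by move=> v; rewrite inE -leNgt => h; apply/eqP; rewrite eq_le h hy.
have yS : forall e : {set V}, \sum_(v | v \in e) y v = \sum_(v in S :&: e) y v.
  move=> e; rewrite [LHS]big_mkcond [RHS]big_mkcond; apply: eq_bigr => v _.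
  rewrite finset.in_setI; case vS: (v \in S); case: (v \in e) => //=.
  by rewrite y0 ?vS.
have tight : forall e, e \in E -> 0 < u e -> \sum_(v | v \in e) y v = 1.
  move=> e eE ue; have /eqP := hcsA e eE.
  by rewrite mulf_eq0 (gt_eqF ue) /= subr_eq0 => /eqP <-.
have loose : forall v, v \in S -> \sum_(e in E | v \in e) u e = 1.
  move=> v; rewrite inE => yv; have /eqP := hcsB v.
  by rewrite mulf_eq0 (gt_eqF yv) /= subr_eq0 => /eqP.
have inred : forall e, e \in E -> 0 < u e -> S :&: e \in red (induced S E).
  move=> e eE ue.
  have ne : S :&: e != finset.set0.
    apply/negP => /eqP h0; have := tight e eE ue; rewrite yS h0 big_set0.
    by move/eqP; rewrite eq_sym oner_eq0.
  have ind : S :&: e \in induced S E by apply/imsetP; exists e => //; rewrite inE eE ne.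
  rewrite /red inE ind /=; apply/negP => /existsP [g /andP [gI /andP [ng sg]]].
  move: gI => /imsetP [e2]; rewrite inE => /andP [e2E _] ge2.
  have := hpy e2 e2E; rewrite yS -ge2.
  have [w wg wn] : exists2 w, w \in g & w \notin S :&: e.
    apply/fintype.subsetPn; apply/negP => h; move: ng; rewrite finset.eqEsubset h sg.
    by [].
  have wS : w \in S by move: wg; rewrite ge2 finset.in_setI => /andP [].
  rewrite (big_setID (S :&: e)) /= (finset.setIidPr sg) -yS tight //.
  have : 0 < \sum_(v in g :\: (S :&: e)) y v.
    rewrite (bigD1 w) /=; last by rewrite finset.in_setD wn wg.
    have : 0 < y w by move: wS; rewrite inE.
    have : 0 <= \sum_(i in g :\: (S :&: e) | i != w) y i by apply: sumr_ge0.
    lra.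
  lra.
pose w f := \sum_(e | ((e \in E) && (0 < u e)) && (S :&: e == f)) u e.
exists S.
apply: (@le_trans _ _ U); first by apply: rho_le; split => // v _; apply: hcu.
have -> : U = \sum_(f in red (induced S E)) w f.
  transitivity (\sum_(e | (e \in E) && (0 < u e)) u e).
    rewrite /U [RHS]big_mkcondr /=; apply: eq_bigr => e eE.
    by move: (hu e); rewrite le_eqVlt => /orP [/eqP <-|->] //; case: ifP.
  by apply: partition_big => e /andP [eE ue]; exact: inred.
apply: tau_ge.
  by move=> f /(fintype.subsetP (red_sub _)); apply: ind_edge.
split; first by move=> f _; rewrite /w sumr_ge0.
move=> v vS; rewrite -(loose v vS).
have -> : \sum_(f in red (induced S E) | v \in f) w f =
    \sum_(e | ((e \in E) && (0 < u e)) && (v \in S :&: e)) u e.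
  symmetry; rewrite (partition_big (fun e => S :&: e)
     (fun f => (f \in red (induced S E)) && (v \in f))) /=; last first.
    by move=> e /andP [/andP [eE ue] ve]; rewrite inred.
  apply: eq_bigr => f /andP [_ vf]; apply: eq_bigl => e.
  by case: eqP => [->|]; rewrite ?vf ?andbT ?andbF.
apply: sub_sum => [e /andP [/andP [eE _]]|e /andP [eE _]]; last exact: hu.
by rewrite finset.in_setI => /andP [_ ve]; rewrite eE ve.
Qed.

End Hyp2.


Unset Implicit Arguments. Set Strict Implicit.

Theorem lemma3p6 (R : realType) (V : finType) (E : {set {set V}})
  (hE0 : finset.set0 \notin E)
  (hV : \bigcup_(e in E) e = [set: V]) :
  let W := [set: V] in
  [/\ tau_star R W (red E) <= kappa R W E,
      rho_star R W (red E) <= kappa R W E,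
      rho_star R W (red E) = rho_star R W E
    & kappa R W E <= psi_star R W E].
Proof.
move=> W.
have hcov : forall v, exists2 e, e \in E & v \in e.
  move=> v; have : v \in \bigcup_(e in E) e by rewrite hV finset.in_setT.
  by case/bigcupP => e eE ve; exists e.
have hind : induced [set: V] E = E.
  apply/setP => e; apply/imsetP/idP => [[e' ]|eE].
    by rewrite inE => /andP [e'E _] ->; rewrite finset.setTI.
  exists e; last by rewrite finset.setTI.
  rewrite inE eE finset.setTI /=; apply/negP => /eqP e0.
  by move: hE0; rewrite -e0 eE.
have kge : forall S, tau_star R S (red (induced S E)) <= kappa R W E.
  move=> S; rewrite /kappa.
  by apply: (@le_bigmax_cond _ _ _ 0 S); exact: finset.subsetT.
have h3 := rho_red R hcov.
split => //.
- by have := kge [set: V]; rewrite hind.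
- rewrite h3; have [S hS] := kappa_rho R hcov; exact: le_trans hS (kge S).
- by apply: le_bigmax2 => S _; apply: tau_red_le.
Qed.
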